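(* Let $m\ge2$ and $G=CK(2m-1)$. There exists a set $B$ of $m$ edges of $G$ that has an edge in common with every simple Hamiltonian path of $G$.
   Context: $CK(2m-1)$ is the complete convex geometric graph on $2m-1$ points in convex position in the plane, labelled cyclically $0,\dots,2m-2$ (elements of $\mathbb{Z}_{2m-1}$), with all segments between vertices as edges. A simple Hamiltonian path is a path through all vertices whose edges pairwise do not cross. *)

(* Defs.v *)
From mathcomp Require Import all_boot.
Set Implicit Arguments. Unset Strict Implicit. Unset Printing Implicit Defensive.

(* Vertices of CK(n): 'I_n, points in convex position labelled cyclically
   0, ..., n-1.  Edges: all 2-element vertex sets (segments). *)

(* x lies strictly inside the arc between a and b (w.r.t. the linear order of
   labels, i.e. on one of the two sides of the chord ab). *)
Definition strictly_between n (a b x : 'I_n) : bool :=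
  (minn a b < x) && (x < maxn a b).

(* For points in convex position, the segments ab and cd cross iff their four
   endpoints are distinct and c, d lie on different sides of the chord ab. *)
Definition cross n (a b c d : 'I_n) : bool :=
  uniq [:: a; b; c; d] &&
  (strictly_between a b c != strictly_between a b d).

Definition path_edges n (p : seq 'I_n) : seq ('I_n * 'I_n) := zip p (behead p).

Definition simple_ham_path n (p : seq 'I_n) : bool :=
  [&& size p == n, uniq p &
      all2rel (fun e f : 'I_n * 'I_n => ~~ cross e.1 e.2 f.1 f.2) (path_edges p)].

Definition edge_of n (e : 'I_n * 'I_n) : {set 'I_n} := [set e.1; e.2].

(* Main.v *)
Require Import Defs.
From mathcomp Require Import all_boot zify.
Set Implicit Arguments. Unset Strict Implicit.

Lemma count_indep (T : eqType) (P : pred T) (x : T) (s : seq T) :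
  (forall e, e \in zip (x :: s) s -> ~~ (P e.1 && P e.2)) ->
  2 * count P (x :: s) <= size (x :: s) + P x.
Proof.
elim: s x => [|y s IH] x H /=; first by case: (P x).
have H1 : forall e, e \in zip (y :: s) s -> ~~ (P e.1 && P e.2).
  by move=> e he; apply: H; rewrite /= inE he orbT.
have := IH y H1. have := H (x, y). rewrite /= inE eqxx /= => /(_ isT).
case: (P x); case: (P y) => //= _; lia.
Qed.

Lemma full_mem n (p : seq 'I_n) : uniq p -> size p = n -> forall x, x \in p.
Proof.
move=> up sp.
have : #|p| = #|'I_n| by rewrite card_ord (card_uniqP up).
move/subset_cardP => /(_ (subset_predT _)) E x.
by rewrite E.
Qed.

Lemma count_le n m (p : seq 'I_n) : uniq p -> size p = n -> m < n ->
  count (fun x : 'I_n => x <= m) p = m.+1.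
Proof.
move=> up sp lt.
have pe : perm_eq p (enum 'I_n).
  apply: uniq_perm => //; first exact: enum_uniq.
  by move=> x; rewrite mem_enum full_mem.
rewrite (permP pe).
rewrite -(count_map val (fun i => i <= m)) val_enum_ord.
have -> : n = m.+1 + (n - m.+1) by lia.
rewrite iotaD count_cat.
rewrite (eq_in_count (a1 := fun i => i <= m) (a2 := predT)); last first.
  by move=> i; rewrite mem_iota /=; lia.
rewrite (@eq_in_count _ (fun i => i <= m) pred0 (iota _ _)); last first.
  by move=> i; rewrite mem_iota /=; lia.
by rewrite count_predT count_pred0 size_iota addn0.
Qed.

Lemma has_nb n (p : seq 'I_n) x : x \in p -> 2 <= size p ->
  exists2 e, e \in path_edges p & (e.1 == x) || (e.2 == x).
Proof.
rewrite /path_edges.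
elim: p => [|a [|b s] IH] //= hx _.
move: hx; rewrite inE => /orP [/eqP ->|hx].
  by exists (a, b); rewrite ?inE ?eqxx.
case: s IH hx => [|c s] IH hx.
  by exists (a, b); rewrite ?inE ?eqxx //=; move: hx; rewrite inE eq_sym => ->; rewrite orbT.
have [e he H] := IH hx isT.
by exists e => //; rewrite inE he orbT.
Qed.

Lemma edge_neq n (p : seq 'I_n) e : uniq p -> e \in path_edges p -> e.1 != e.2.
Proof.
rewrite /path_edges.
elim: p => [|a [|b s] IH] //= /andP [ha up]; rewrite inE => /orP [/eqP -> /=|he].
  by apply: contraNneq ha => ->; rewrite inE eqxx.
exact: IH.
Qed.

Lemma noncross n (p : seq 'I_n) e f : simple_ham_path p ->
  e \in path_edges p -> f \in path_edges p -> ~~ cross e.1 e.2 f.1 f.2.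
Proof.
case/and3P => _ _ /allrelP H he hf; exact: H.
Qed.

Lemma unit_edge n m (p : seq 'I_n) : simple_ham_path p -> m < n ->
  forall d e, e \in path_edges p -> e.1 <= m -> e.2 <= m ->
  maxn e.1 e.2 - minn e.1 e.2 <= d ->
  exists2 f, f \in path_edges p &
    (maxn f.1 f.2 <= m) && (maxn f.1 f.2 == (minn f.1 f.2).+1).
Proof.
move=> hp hmn d; have hp' := hp; case/and3P: hp' => /eqP sp up _.
elim: d => [|d IH] [x y] he /= hx hy hd.
  have : (x:nat) != y := edge_neq up he. lia.
have nxy : (x:nat) != y := edge_neq up he.
case: (boolP (maxn x y == (minn x y).+1)) => h1.
  by exists (x, y) => //=; rewrite h1 andbT; lia.
have ltc : (minn x y).+1 < n by lia.
set c : 'I_n := Ordinal ltc.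
have [f hf hcf] := has_nb (full_mem up sp c) (ltac:(lia)).
case: f hf hcf => u v hf /= hcf.
have hnc := noncross hp he hf.
have nuv : (u:nat) != v := edge_neq up hf.
have hcf' : ((u:nat) == c) || ((v:nat) == c) := hcf.
move: hcf' => /= hcf'.
case: (boolP ((minn x y <= u <= maxn x y) && (minn x y <= v <= maxn x y))) => hin.
  apply: (IH (u, v)) => //=; lia.
exfalso; move: hnc; rewrite /cross /strictly_between /= !inE -!val_eqE /=.
lia.
Qed.

Lemma main n m : 2 <= m -> n.+1 = 2 * m - 1 ->
  exists B : {set {set 'I_n.+1}},
    [/\ #|B| = m,
        (forall e, e \in B -> #|e| = 2) &
        (forall p : seq 'I_n.+1, simple_ham_path p ->
           exists2 e, e \in path_edges p & edge_of e \in B)].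
Proof.
move=> hm hn.
pose f (i : 'I_m) : {set 'I_n.+1} := [set inord i; inord i.+1].
have hi (i : 'I_m) : (i : nat) < n.+1 by have := ltn_ord i; lia.
have hi1 (i : 'I_m) : (i : nat).+1 < n.+1 by have := ltn_ord i; lia.
exists [set f i | i : 'I_m]; split.
- rewrite card_imset ?card_ord // => i j hij.
  have h1 : (inord i : 'I_n.+1) \in f j by rewrite -hij /f !inE eqxx.
  have h2 : (inord j : 'I_n.+1) \in f i by rewrite hij /f !inE eqxx.
  move: h1 h2; rewrite /f !inE -!val_eqE /= !inordK //.
  move=> a b; apply: val_inj => /=; lia.
- move=> e /imsetP [i _ ->]; rewrite /f cards2 -val_eqE /= !inordK //; lia.
- move=> p hp; have hp' := hp; case/and3P: hp' => /eqP sp up _.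
  have hmn : m < n.+1 by lia.
  case: (boolP [exists e : 'I_n.+1 * 'I_n.+1,
     (e \in path_edges p) && ((e.1 <= m) && (e.2 <= m))]).
  + case/existsP => e /andP [he /andP [h1 h2]].
    have hd : maxn e.1 e.2 - minn e.1 e.2 <= n.
      by have := ltn_ord e.1; have := ltn_ord e.2; lia.
    have [g hg /andP [g1 g2]] := unit_edge hp hmn (d := n) he h1 h2 hd.
    exists g => //; apply/imsetP.
    have hlt0 : minn g.1 g.2 < m by lia.
    exists (Ordinal hlt0) => //.
    rewrite /edge_of /f /=.
    case: g hg g1 g2 hlt0 => a b /= hg g1 g2 hlt0.
    apply/setP => z; rewrite !inE -!val_eqE /= !inordK; try lia.
  + move/existsPn => H; exfalso.
    case: p hp sp up H => [|x s] hp sp up H; first by [].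
    have := @count_indep _ (fun y : 'I_n.+1 => y <= m) x s.
    rewrite count_le // sp.
    have HH : forall e, e \in zip (x :: s) s -> ~~ ((e.1 <= m) && (e.2 <= m)).
      move=> e he; have := H e; rewrite -/(path_edges (x :: s)) he /=.
      by [].
    move=> /(_ HH); lia.
Qed.

Theorem proposition2 (m : nat) (hm : 2 <= m) :
  exists B : {set {set 'I_(2 * m - 1)}},
    [/\ #|B| = m,
        (forall e, e \in B -> #|e| = 2) &
        (forall p : seq 'I_(2 * m - 1), simple_ham_path p ->
           exists2 e, e \in path_edges p & edge_of e \in B)].
Proof.
have e : 2 * m - 1 = (2 * m - 2).+1 by lia.
rewrite e; apply: main => //; lia.
Qed.
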